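(* Let $p$ be a prime, $\mathbb{C}_p$ the field of complex $p$-adic numbers with norm $|\cdot|_p$, $a,b,c\in\mathbb{C}_p$ with $b\neq0$, $c\neq ab$, $f(x)=\frac{x+a}{bx+c}$ for $x\neq -c/b$. Fix a square root $\sqrt{(c-1)^2+4ab}$ and let $x_{1}=\frac{1-c+\sqrt{(c-1)^2+4ab}}{2b}$ (a fixed point of $f$). Assume $$\left|\frac{c-ab}{(bx_1+c)^2}\right|_p<1\qquad\text{and}\qquad \left|\frac{b}{bx_1+c}\right|_p=\left|\frac{2b}{1+c+\sqrt{(c-1)^2+4ab}}\right|_p\le 1.$$ Then $V_1(x_1)\subset A(x_1)$.
   Context: $V_1(x_1)=\{x\in\mathbb{C}_p:|x-x_1|_p<1\}$. The basin of attraction of a fixed point $x_0$ is $A(x_0)=\{y\in\mathbb{C}_p: f^n(y)\to x_0 \text{ as } n\to\infty\}$. *)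

(* Defs.v *)
From HB Require Import structures.
From mathcomp Require Import all_boot all_order all_algebra.
From mathcomp Require Import all_classical all_reals all_analysis.
Set Implicit Arguments. Unset Strict Implicit. Unset Printing Implicit Defensive.
Import Order.TTheory GRing.Theory Num.Theory.
Import numFieldNormedType.Exports.
Local Open Scope ring_scope.
Local Open Scope classical_set_scope.

(* We axiomatize
   the relevant structure: an algebraically closed field K with an absolute value
   nrm : K -> R that is non-archimedean, restricts to the p-adic norm
   (|p| = 1/p), and for which K is complete.  C_p is such a field. *)
Record CpLike (p : nat) (R : realType) (K : closedFieldType) (nrm : K -> R) : Prop := {
  nrm_ge0 : forall x, 0 <= nrm x;
  nrm_eq0 : forall x, nrm x = 0 <-> x = 0;
  nrmM : forall x y, nrm (x * y) = nrm x * nrm y;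
  nrm_ultra : forall x y, nrm (x + y) <= Num.max (nrm x) (nrm y);
  nrm_p : nrm (p%:R) = (p%:R)^-1;
  nrm_complete : forall u : nat -> K,
    (forall e : R, 0 < e -> exists N, forall m n, (N <= m)%N -> (N <= n)%N ->
        nrm (u m - u n) < e) ->
    exists l, forall e : R, 0 < e -> exists N, forall n, (N <= n)%N -> nrm (u n - l) < e
}.

Definition mobius (K : fieldType) (a b c : K) (x : K) : K := (x + a) / (b * x + c).

Definition V1 (R : realType) (K : fieldType) (nrm : K -> R) (x1 : K) : set K :=
  [set x | nrm (x - x1) < 1].

Definition basin (R : realType) (K : fieldType) (nrm : K -> R) (a b c x0 : K) : set K :=
  [set y | (forall n, b * iter n (mobius a b c) y + c != 0) /\
           (fun n => nrm (iter n (mobius a b c) y - x0)) @ \oo --> (0 : R)].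

(* Main.v *)
Require Import Defs.
From HB Require Import structures.
From mathcomp Require Import all_boot all_order all_algebra.
From mathcomp Require Import all_classical all_reals all_analysis.
From mathcomp Require Import ring lra.
Import Order.TTheory GRing.Theory Num.Theory.
Import numFieldNormedType.Exports.
Local Open Scope ring_scope.
Local Open Scope classical_set_scope.

Lemma nrm1 {p} {R : realType} {K : closedFieldType} {nrm : K -> R} :
  CpLike p nrm -> nrm 1 = 1.
Proof.
move=> HK; have h := nrmM HK 1 1; rewrite mulr1 in h.
have n0 : nrm 1 != 0 by apply/eqP => /(nrm_eq0 HK) /eqP; rewrite oner_eq0.
by apply: (mulfI n0); rewrite -h mulr1.
Qed.

Lemma nrmN1 {p} {R : realType} {K : closedFieldType} {nrm : K -> R} :
  CpLike p nrm -> nrm (-1) = 1.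
Proof.
move=> HK; have h := nrmM HK (-1) (-1); rewrite mulrNN mulr1 (nrm1 HK) in h.
have g := nrm_ge0 HK (-1).
move: h g; set t := nrm (-1) => h g. nra.
Qed.

Lemma nrmN {p} {R : realType} {K : closedFieldType} {nrm : K -> R} (x : K) :
  CpLike p nrm -> nrm (- x) = nrm x.
Proof. by move=> HK; rewrite -mulN1r (nrmM HK) (nrmN1 HK) mul1r. Qed.

Lemma nrmV {p} {R : realType} {K : closedFieldType} {nrm : K -> R} (x : K) :
  CpLike p nrm -> nrm (x^-1) = (nrm x)^-1.
Proof.
move=> HK; have [->|x0] := eqVneq x 0.
  by rewrite invr0 (proj2 (nrm_eq0 HK 0) erefl) invr0.
have h := nrmM HK x x^-1; rewrite mulfV // (nrm1 HK) in h.
have n0 : nrm x != 0 by apply/eqP => /(nrm_eq0 HK) /eqP; rewrite (negPf x0).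
by apply: (mulfI n0); rewrite -h mulfV.
Qed.

Lemma nrm1D {p} {R : realType} {K : closedFieldType} {nrm : K -> R} (y : K) :
  CpLike p nrm -> nrm y < 1 -> nrm (1 + y) = 1.
Proof.
move=> HK hy; apply/eqP; rewrite eq_le; apply/andP; split.
  apply: le_trans (nrm_ultra HK 1 y) _; rewrite (nrm1 HK) ge_max lexx /=.
  exact: ltW.
have h := nrm_ultra HK (1 + y) (- y); rewrite addrK (nrm1 HK) (nrmN _ HK) in h.
move: h; rewrite le_max => /orP [] // h.
by move: (le_lt_trans h hy); rewrite ltxx.
Qed.

Lemma two_neq0 {p} {R : realType} {K : closedFieldType} {nrm : K -> R} :
  prime p -> CpLike p nrm -> (2 : K) != 0.
Proof.
move=> hp HK; apply/eqP => h2.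
have hp2 : (p%:R : K) = (odd p)%:R.
  by rewrite -{1}(odd_double_half p) natrD -muln2 natrM h2 mulr0 addr0.
have := nrm_p HK; rewrite hp2.
have p1 : (1 < p)%N by exact: prime_gt1.
have pR : (1 : R) < p%:R by rewrite ltr1n.
case: (odd p) => /=.
  rewrite (nrm1 HK) => /(congr1 GRing.inv); rewrite invr1 invrK => e.
  by move: pR; rewrite -e ltxx.
rewrite (proj2 (nrm_eq0 HK 0) erefl) => /eqP; rewrite eq_sym invr_eq0.
by rewrite pnatr_eq0 => /eqP e; move: p1; rewrite e.
Qed.

Theorem lemma3p5 (p : nat) (R : realType) (K : closedFieldType) (nrm : K -> R)
  (hp : prime p) (HK : CpLike p nrm) (a b c s : K)
  (hb : b != 0) (hc : c != a * b)
  (hs : s ^+ 2 = (c - 1) ^+ 2 + 4 * a * b) :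
  let x1 := (1 - c + s) / (2 * b) in
  nrm ((c - a * b) / (b * x1 + c) ^+ 2) < 1 ->
  nrm (b / (b * x1 + c)) = nrm (2 * b / (1 + c + s)) ->
  nrm (2 * b / (1 + c + s)) <= 1 ->
  V1 nrm x1 `<=` basin nrm a b c x1.
Proof.
move=> x1 hq hbeq hbeta.
have h2 := two_neq0 hp HK.
have h2b : 2 * b * x1 = 1 - c + s by rewrite /x1 mulrC divfK // mulf_neq0.
have hD : b * x1 + c = (1 + c + s) / 2.
  have es : s = 2 * b * x1 - 1 + c by rewrite h2b; ring.
  by rewrite es; apply: (mulIf h2); rewrite divfK //; ring.
have hD0 : b * x1 + c != 0.
  rewrite hD mulf_eq0 invr_eq0 (negPf h2) orbF; apply/eqP => e.
  have es : s = - (1 + c) by rewrite -[s]subr0 -e; ring.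
  move: hs; rewrite es => /eqP; rewrite -subr_eq0.
  have -> : (- (1 + c)) ^+ 2 - ((c - 1) ^+ 2 + 4 * a * b) = 4 * (c - a * b) by ring.
  rewrite mulf_eq0 subr_eq0 (negPf hc) orbF.
  have -> : (4 : K) = 2 * 2 by ring.
  by rewrite mulf_eq0 (negPf h2).
have hfix : x1 * (b * x1 + c) = x1 + a.
  apply/eqP; rewrite -subr_eq0.
  have h4b : (4 : K) * b != 0.
    have -> : (4 : K) * b = 2 * 2 * b by ring.
    by rewrite !mulf_neq0.
  rewrite -(mulrI_eq0 _ (mulfI h4b)).
  have -> : 4 * b * (x1 * (b * x1 + c) - (x1 + a))
     = (2 * b * x1) ^+ 2 + 2 * (c - 1) * (2 * b * x1) - 4 * a * b by ring.
  rewrite h2b.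
  have -> : (1 - c + s) ^+ 2 + 2 * (c - 1) * (1 - c + s) - 4 * a * b
     = s ^+ 2 - ((c - 1) ^+ 2 + 4 * a * b) by ring.
  by rewrite hs subrr.
set D := b * x1 + c in hD0 hfix hq hbeq.
set q := nrm ((c - a * b) / D ^+ 2) in hq.
have hq0 : 0 <= q := nrm_ge0 HK _.
have step : forall x, nrm (x - x1) < 1 ->
    b * x + c != 0 /\ nrm (mobius a b c x - x1) = q * nrm (x - x1).
  move=> x hx.
  have ex : b * x + c = D * (1 + b / D * (x - x1)).
    by rewrite mulrDr mulr1 mulrA mulrCA divff // mulr1 /D; ring.
  have n1 : nrm (1 + b / D * (x - x1)) = 1.
    apply: (nrm1D _ HK); rewrite (nrmM HK) hbeq.
    apply: le_lt_trans (ler_wpM2r (nrm_ge0 HK _) hbeta) _; by rewrite mul1r.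
  have hx0 : b * x + c != 0.
    rewrite ex mulf_neq0 //; apply/eqP => e; move: n1.
    by rewrite e (proj2 (nrm_eq0 HK 0) erefl) => /eqP; rewrite eq_sym oner_eq0.
  split => //.
  have em : mobius a b c x - x1 = (x - x1) * (c - a * b) / ((b * x + c) * D).
    rewrite /mobius; apply: (mulIf (mulf_neq0 hx0 hD0)).
    rewrite divfK ?mulf_neq0 // mulrBl mulrA divfK // mulrA.
    rewrite [x1 * _]mulrC -mulrA [(b * x + c) * _]mulrC hfix /D; ring.
  rewrite em ex /q !(nrmM HK, nrmV _ HK) n1 mulr1.
  ring.
move=> y /= hy.
have key : forall n, nrm (iter n (mobius a b c) y - x1) = q ^+ n * nrm (y - x1).
  elim => [|n IH] /=; first by rewrite expr0 mul1r.
  have hlt : nrm (iter n (mobius a b c) y - x1) < 1.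
    rewrite IH; apply: le_lt_trans hy; rewrite ler_piMl ?(nrm_ge0 HK) //.
    by rewrite exprn_ile1 // ltW.
  by rewrite (step _ hlt).2 IH exprS mulrA.
split.
  move=> n; apply: (step _ _).1; rewrite key; apply: le_lt_trans hy.
  by rewrite ler_piMl ?(nrm_ge0 HK) // exprn_ile1 // ltW.
rewrite (_ : (fun n => _) = (fun n => q ^+ n * nrm (y - x1))); last first.
  by apply: funext => n; rewrite key.
rewrite -(mul0r (nrm (y - x1))).
apply: cvgMr_tmp; apply: cvg_expr; by rewrite ger0_norm.
Qed.
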